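(* Let $(A,[\cdot,\cdot],\circ)$ and $(V,[\cdot,\cdot]_V,\circ_V)$ be Malcev-Poisson algebras and $\varrho,\mu:A\to\mathrm{End}(V)$ linear maps. Then $(V,\circ_V,[\cdot,\cdot]_V,\mu,\varrho)$ is an $A$-module Malcev-Poisson algebra if and only if $A\oplus V$ is a Malcev-Poisson algebra with the operations $$\{x+a,y+b\}=[x,y]+\varrho(x)b-\varrho(y)a+[a,b]_V,\qquad (x+a)\bullet(y+b)=x\circ y+\mu(x)b+\mu(y)a+a\circ_Vb,$$ for $x,y\in A$, $a,b\in V$.
   Context: Field $\mathbb{K}$ algebraically closed, characteristic $0$; spaces finite-dimensional. Malcev algebra: antisymmetric bracket with $J(x,y,[x,z])=[J(x,y,z),x]$, $J(x,y,z)=[[x,y],z]+[[z,x],y]+[[y,z],x]$. Malcev-Poisson algebra: Malcev bracket plus commutative associative product $\circ$ with $[x,y\circ z]=[x,y]\circ z+y\circ[x,z]$. Representations: Malcev, $\varrho([[x,y],z])=\varrho(z)\varrho(y)\varrho(x)-\varrho(y)\varrho(x)\varrho(z)+\varrho(x)\varrho([y,z])+\varrho([x,z])\varrho(y)$; associative, $\mu(x\circ y)=\mu(x)\mu(y)$; Malcev-Poisson, $(V,\varrho,\mu)$ with both and $\varrho(x\circ y)=\mu(y)\varrho(x)+\mu(x)\varrho(y)$, $\mu([x,y])=\varrho(x)\mu(y)-\mu(y)\varrho(x)$. $A$-module Malcev algebra $(V,[\cdot,\cdot]_V,\varrho)$: $\varrho$ a Malcev representation and for $x,y\in A$, $a,b,c\in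 V$: $\varrho([x,y])[a,b]_V=\varrho(x)[\varrho(y)a,b]_V-[\varrho(y)\varrho(x)a,b]_V-[\varrho(x)\varrho(y)b,a]_V+\varrho(y)[\varrho(x)b,a]_V$; $[\varrho(x)a,\varrho(y)b]_V=[\varrho([x,y])a,b]_V-\varrho(x)[\varrho(y)a,b]_V+\varrho(y)\varrho(x)[a,b]_V+[\varrho(y)\varrho(x)b,a]_V$; $[\varrho(x)a,[b,c]_V]_V=[[\varrho(x)b,a]_V,c]_V-\varrho(x)[[b,a]_V,c]_V-[\varrho(x)[a,c]_V,b]_V-[[\varrho(x)c,b]_V,a]_V$. $A$-module associative algebra $(V,\circ_V,\mu)$: $\mu$ an associative representation and $\mu(x)(a\circ_Vb)=(\mu(x)a)\circ_Vb$. $A$-module Malcev-Poisson algebra $(V,\circ_V,[\cdot,\cdot]_V,\mu,\varrho)$: $(V,[\cdot,\cdot]_V,\varrho)$ an $A$-module Malcev algebra, $(V,\circ_V,\mu)$ an $A$-module associative algebra, $(V,\varrho,\mu)$ a Malcev-Poisson representation of $A$, and $\varrho(x)(a\circ_Vb)=(\varrho(x)a)\circ_Vb+a\circ_V(\varrho(x)b)$, $[a,\mu(x)b]_V=-(\varrho(x)a)\circ_Vb+\mu(x)[a,b]_V$ for all $x\in A$, $a,b\in V$. *)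

(* Defs.v *)
From HB Require Import structures.
From mathcomp Require Import all_boot all_order all_algebra.
Set Implicit Arguments. Unset Strict Implicit. Unset Printing Implicit Defensive.
Import GRing.Theory.
Local Open Scope ring_scope.

Definition lin {K : fieldType} {U W : lmodType K} (f : U -> W) : Prop :=
  forall (a : K) x y, f (a *: x + y) = a *: f x + f y.

Definition bilin {K : fieldType} {U W : lmodType K} (f : U -> U -> W) : Prop :=
  (forall z (a : K) x y, f (a *: x + y) z = a *: f x z + f y z) /\
  (forall z (a : K) x y, f z (a *: x + y) = a *: f z x + f z y).

Definition lin_end {K : fieldType} {U W : lmodType K} (rho : U -> W -> W) : Prop :=
  (forall x, lin (rho x)) /\
  (forall (a : K) x y v, rho (a *: x + y) v = a *: rho x v + rho y v).

Definition jac {K : fieldType} {U : lmodType K} (br : U -> U -> U) (x y z : U) : U :=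
  br (br x y) z + br (br z x) y + br (br y z) x.

Definition malcev {K : fieldType} {U : lmodType K} (br : U -> U -> U) : Prop :=
  [/\ bilin br,
      (forall x y, br x y = - br y x) &
      (forall x y z, jac br x y (br x z) = br (jac br x y z) x)].

Definition malcev_poisson {K : fieldType} {U : lmodType K}
    (br pr : U -> U -> U) : Prop :=
  [/\ malcev br, bilin pr,
      (forall x y, pr x y = pr y x),
      (forall x y z, pr x (pr y z) = pr (pr x y) z) &
      (forall x y z, br x (pr y z) = pr (br x y) z + pr y (br x z))].

Section Modules.
Variables (K : fieldType) (A V : lmodType K).
Variables (brA prA : A -> A -> A) (brV prV : V -> V -> V) (rho mu : A -> V -> V).

Definition malcev_rep : Prop :=
  forall x y z v,
    rho (brA (brA x y) z) v =
      rho z (rho y (rho x v)) - rho y (rho x (rho z v))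
      + rho x (rho (brA y z) v) + rho (brA x z) (rho y v).

Definition assoc_rep : Prop :=
  forall x y v, mu (prA x y) v = mu x (mu y v).

Definition mp_rep : Prop :=
  [/\ malcev_rep, assoc_rep,
      (forall x y v, rho (prA x y) v = mu y (rho x v) + mu x (rho y v)) &
      (forall x y v, mu (brA x y) v = rho x (mu y v) - mu y (rho x v))].

Definition module_malcev : Prop :=
  [/\ malcev_rep,
    (forall x y a b,
      rho (brA x y) (brV a b) =
        rho x (brV (rho y a) b) - brV (rho y (rho x a)) b
        - brV (rho x (rho y b)) a + rho y (brV (rho x b) a)),
    (forall x y a b,
      brV (rho x a) (rho y b) =
        brV (rho (brA x y) a) b - rho x (brV (rho y a) b)
        + rho y (rho x (brV a b)) + brV (rho y (rho x b)) a) &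
    (forall x a b c,
      brV (rho x a) (brV b c) =
        brV (brV (rho x b) a) c - rho x (brV (brV b a) c)
        - brV (rho x (brV a c)) b - brV (brV (rho x c) b) a)].

Definition module_assoc : Prop :=
  assoc_rep /\ (forall x a b, mu x (prV a b) = prV (mu x a) b).

Definition module_malcev_poisson : Prop :=
  [/\ module_malcev, module_assoc, mp_rep,
      (forall x a b, rho x (prV a b) = prV (rho x a) b + prV a (rho x b)) &
      (forall x a b, brV a (mu x b) = - prV (rho x a) b + mu x (brV a b))].

(* operations on the direct sum A ⊕ V, represented as the product A * V *)
Definition dsum_br (p q : A * V) : A * V :=
  (brA p.1 q.1, rho p.1 q.2 - rho q.1 p.2 + brV p.2 q.2).

Definition dsum_pr (p q : A * V) : A * V :=
  (prA p.1 q.1, mu p.1 q.2 + mu q.1 p.2 + prV p.2 q.2).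

End Modules.

(* Main.v *)
From HB Require Import structures.
Require Import Defs.
From mathcomp Require Import all_boot all_order all_algebra ring.
Import GRing.Theory VectorInternalTheory.
Local Open Scope ring_scope.
Inductive ea : Type := aX of nat | aZ | aAdd of ea & ea | aNeg of ea | aBr of ea & ea | aPr of ea & ea.
Inductive ev : Type := vX of nat | vZ | vAdd of ev & ev | vNeg of ev | vMuln of ev & nat
  | vBr of ev & ev | vPr of ev & ev | vRho of ea & ev | vMu of ea & ev.

Fixpoint eqa (s t : ea) : bool :=
  match s, t with
  | aX n, aX m => n == m
  | aZ, aZ => true
  | aAdd s1 s2, aAdd t1 t2 => eqa s1 t1 && eqa s2 t2
  | aNeg s1, aNeg t1 => eqa s1 t1
  | aBr s1 s2, aBr t1 t2 => eqa s1 t1 && eqa s2 t2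
  | aPr s1 s2, aPr t1 t2 => eqa s1 t1 && eqa s2 t2
  | _, _ => false
  end.
Lemma eqaP : Equality.axiom eqa.
Proof.
move=> s t; apply: (iffP idP) => [|<-]; last by elim: s => //= *; apply/andP.
elim: s t => [n||s1 IH1 s2 IH2|s1 IH1|s1 IH1 s2 IH2|s1 IH1 s2 IH2] [m||t1 t2|t1|t1 t2|t1 t2] //=.
- by move/eqP=> ->.
- by case/andP=> /IH1 -> /IH2 ->.
- by move/IH1=> ->.
- by case/andP=> /IH1 -> /IH2 ->.
- by case/andP=> /IH1 -> /IH2 ->.
Qed.
HB.instance Definition _ := hasDecEq.Build ea eqaP.

Fixpoint eqv (s t : ev) : bool :=
  match s, t with
  | vX n, vX m => n == m
  | vZ, vZ => true
  | vAdd s1 s2, vAdd t1 t2 => eqv s1 t1 && eqv s2 t2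
  | vNeg s1, vNeg t1 => eqv s1 t1
  | vMuln s1 n, vMuln t1 m => eqv s1 t1 && (n == m)
  | vBr s1 s2, vBr t1 t2 => eqv s1 t1 && eqv s2 t2
  | vPr s1 s2, vPr t1 t2 => eqv s1 t1 && eqv s2 t2
  | vRho s1 s2, vRho t1 t2 => (s1 == t1) && eqv s2 t2
  | vMu s1 s2, vMu t1 t2 => (s1 == t1) && eqv s2 t2
  | _, _ => false
  end.
Lemma eqvP : Equality.axiom eqv.
Proof.
move=> s t; apply: (iffP idP) => [|<-]; last by elim: s => //= *; rewrite ?eqxx //=; apply/andP.
elim: s t => [n||s1 IH1 s2 IH2|s1 IH1|s1 IH1 n|s1 IH1 s2 IH2|s1 IH1 s2 IH2|s1 s2 IH2|s1 s2 IH2]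
  [m||t1 t2|t1|t1 m|t1 t2|t1 t2|t1 t2|t1 t2] //=.
- by move/eqP=> ->.
- by case/andP=> /IH1 -> /IH2 ->.
- by move/IH1=> ->.
- by case/andP=> /IH1 -> /eqP ->.
- by case/andP=> /IH1 -> /IH2 ->.
- by case/andP=> /IH1 -> /IH2 ->.
- by case/andP=> /eqP -> /IH2 ->.
- by case/andP=> /eqP -> /IH2 ->.
Qed.
HB.instance Definition _ := hasDecEq.Build ev eqvP.

Fixpoint codea (s : ea) : seq nat :=
  match s with
  | aX n => [:: 0%N; n] | aZ => [:: 1%N] | aAdd s t => 2%N :: codea s ++ codea t
  | aNeg s => 3%N :: codea s | aBr s t => 4%N :: codea s ++ codea t
  | aPr s t => 5%N :: codea s ++ codea t
  end.
Fixpoint codev (s : ev) : seq nat :=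
  match s with
  | vX n => [:: 0%N; n] | vZ => [:: 1%N] | vAdd s t => 2%N :: codev s ++ codev t
  | vNeg s => 3%N :: codev s | vMuln s n => 4%N :: n :: codev s
  | vBr s t => 5%N :: codev s ++ codev t | vPr s t => 6%N :: codev s ++ codev t
  | vRho s t => 7%N :: codea s ++ codev t | vMu s t => 8%N :: codea s ++ codev t
  end.
Fixpoint lexlt (s t : seq nat) : bool :=
  match s, t with
  | [::], [::] => false | [::], _ => true | _, [::] => false
  | x :: s', y :: t' => (x < y)%N || ((x == y) && lexlt s' t')
  end.

(* signed monomial lists *)
Definition bigmul {M1 M2 M3 : Type} (mk : bool * M1 -> bool * M2 -> seq (bool * M3))
  (l1 : seq (bool * M1)) (l2 : seq (bool * M2)) : seq (bool * M3) :=
  flatten [seq flatten [seq mk p q | q <- l2] | p <- l1].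

Definition mkAnti {M : eqType} (code : M -> seq nat) (c : M -> M -> M) (p q : bool * M) : seq (bool * M) :=
  if p.2 == q.2 then [::] else
  if lexlt (code q.2) (code p.2) then [:: (~~ (p.1 (+) q.1), c q.2 p.2)]
  else [:: (p.1 (+) q.1, c p.2 q.2)].
Definition mkComm {M : eqType} (code : M -> seq nat) (c : M -> M -> M) (p q : bool * M) : seq (bool * M) :=
  if lexlt (code q.2) (code p.2) then [:: (p.1 (+) q.1, c q.2 p.2)]
  else [:: (p.1 (+) q.1, c p.2 q.2)].
Definition mkPlain {M1 M2 M3 : Type} (c : M1 -> M2 -> M3) (p : bool * M1) (q : bool * M2) : seq (bool * M3) :=
  [:: (p.1 (+) q.1, c p.2 q.2)].
Definition negl {M : Type} (l : seq (bool * M)) := [seq (~~ p.1, p.2) | p <- l].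

Fixpoint nfA (s : ea) : seq (bool * ea) :=
  match s with
  | aX n => [:: (false, aX n)] | aZ => [::]
  | aAdd s t => nfA s ++ nfA t | aNeg s => negl (nfA s)
  | aBr s t => bigmul (mkAnti codea aBr) (nfA s) (nfA t)
  | aPr s t => bigmul (mkComm codea aPr) (nfA s) (nfA t)
  end.
Fixpoint nfV (s : ev) : seq (bool * ev) :=
  match s with
  | vX n => [:: (false, vX n)] | vZ => [::]
  | vAdd s t => nfV s ++ nfV t | vNeg s => negl (nfV s)
  | vMuln s n => flatten (nseq n (nfV s))
  | vBr s t => bigmul (mkAnti codev vBr) (nfV s) (nfV t)
  | vPr s t => bigmul (mkComm codev vPr) (nfV s) (nfV t)
  | vRho s t => bigmul (mkPlain vRho) (nfA s) (nfV t)
  | vMu s t => bigmul (mkPlain vMu) (nfA s) (nfV t)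
  end.

Definition cancels {M : eqType} (l : seq (bool * M)) : bool :=
  all (fun p => count (fun q => (q.2 == p.2) && q.1) l == count (fun q => (q.2 == p.2) && ~~ q.1) l) l.
Definition checkV (s : ev) : bool := cancels (nfV s).

Definition sgn {U : zmodType} (b : bool) (x : U) := if b then - x else x.

Section Sem.
Variable (U : zmodType) (M : eqType) (ev0 : M -> U).
Fixpoint evL (l : seq (bool * M)) : U :=
  match l with [::] => 0 | p :: l' => sgn p.1 (ev0 p.2) + evL l' end.
Lemma evL_cat l1 l2 : evL (l1 ++ l2) = evL l1 + evL l2.
Proof. by elim: l1 => [|p l IH] /=; rewrite ?add0r // IH addrA. Qed.
Lemma evL_neg l : evL (negl l) = - evL l.
Proof. by elim: l => [|[[] m] l IH] /=; rewrite ?oppr0 // IH opprD ?opprK. Qed.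
Lemma evL_flatten_nseq n l : evL (flatten (nseq n l)) = evL l *+ n.
Proof. by elim: n => [|n IH] //=; rewrite evL_cat IH mulrS. Qed.
Lemma evL_filter (P : pred (bool * M)) l : evL l = evL (filter P l) + evL (filter (predC P) l).
Proof.
elim: l => [|p l IH] /=; first by rewrite addr0.
rewrite /=; case: (P p) => /=; rewrite IH; [by rewrite addrA | by rewrite addrCA].
Qed.
Lemma evL_same m l : all (fun q => q.2 == m) l ->
  evL l = ev0 m *+ count (fun q => ~~ q.1) l - ev0 m *+ count (fun q => q.1) l.
Proof.
elim: l => [|[b m'] l IH] /=; first by rewrite subrr.
case/andP=> /eqP -> /IH ->; case: b => /=; rewrite ?add0n ?add1n ?mulrS.
  by rewrite opprD addrCA.
by rewrite addrA.
Qed.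
Lemma cancels_sound l : cancels l -> evL l = 0.
Proof.
move: {2}(size l) (leqnn (size l)) => n; elim: n l => [|n IH] [|p l] //= Hs.
set P := fun q : bool * M => q.2 == p.2.
move=> Hc; have Hc' : cancels (p :: l) := Hc.
rewrite -/(evL (p :: l)) (evL_filter P).
rewrite (evL_same p.2); last by apply/allP => q; rewrite mem_filter => /andP[].
have -> : count (fun q => ~~ q.1) [seq x <- p :: l | P x] = count (fun q => (q.2 == p.2) && ~~ q.1) (p :: l).
  by rewrite count_filter; apply: eq_count => q; rewrite /= andbC.
have -> : count (fun q => q.1) [seq x <- p :: l | P x] = count (fun q => (q.2 == p.2) && q.1) (p :: l).
  by rewrite count_filter; apply: eq_count => q; rewrite /= andbC.
move: Hc => /andP[/eqP -> _]; rewrite subrr add0r.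
apply: IH.
  rewrite /= /P eqxx /= size_filter; apply: (leq_trans (count_size _ l)); by move: Hs.
apply/allP => q; rewrite mem_filter => /andP[Hq qin].
have Hq' : (q.2 == p.2) = false by move: Hq; rewrite /= /P => /negbTE.
have : all _ (p :: l) := Hc'; move/allP/(_ q qin)/eqP.
rewrite !count_filter => E; apply/eqP.
transitivity (count (fun r => (r.2 == q.2) && r.1) (p :: l)).
  by apply: eq_count => r /=; rewrite /P; case: eqP => [->|] /=; rewrite ?Hq' ?andbT.
rewrite E; apply: eq_count => r /=; rewrite /P; case: eqP => [->|] /=; by rewrite ?Hq' ?andbT.
Qed.
End Sem.
Arguments evL {U M} ev0 l.

Section Bil.
Variables (U1 U2 W : zmodType) (f : U1 -> U2 -> W).
Hypotheses (fDl : forall x y z, f (x + y) z = f x z + f y z) (fDr : forall x y z, f z (x + y) = f z x + f z y).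
Lemma f0l z : f 0 z = 0. Proof. by apply: (addrI (f 0 z)); rewrite -fDl !addr0. Qed.
Lemma f0r z : f z 0 = 0. Proof. by apply: (addrI (f z 0)); rewrite -fDr !addr0. Qed.
Lemma fNl x z : f (- x) z = - f x z. Proof. by apply: (addrI (f x z)); rewrite -fDl !subrr f0l. Qed.
Lemma fNr x z : f z (- x) = - f z x. Proof. by apply: (addrI (f z x)); rewrite -fDr !subrr f0r. Qed.
Lemma f_sgn b c x y : f (sgn b x) (sgn c y) = sgn (b (+) c) (f x y).
Proof. by case: b; case: c => /=; rewrite ?fNl ?fNr ?opprK. Qed.

Variables (M1 M2 M3 : eqType) (e1 : M1 -> U1) (e2 : M2 -> U2) (e3 : M3 -> W).
Variable mk : bool * M1 -> bool * M2 -> seq (bool * M3).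
Hypothesis mkP : forall p q, evL e3 (mk p q) = f (sgn p.1 (e1 p.2)) (sgn q.1 (e2 q.2)).
Lemma bigmulP l1 l2 : evL e3 (bigmul mk l1 l2) = f (evL e1 l1) (evL e2 l2).
Proof.
rewrite /bigmul; elim: l1 => [|p l1 IH] /=; first by rewrite f0l.
rewrite evL_cat IH fDl; congr (_ + _).
clear IH; elim: l2 => [|q l2 IH2] /=; first by rewrite f0r.
by rewrite evL_cat IH2 mkP fDr.
Qed.
End Bil.
Arguments f_sgn {U1 U2 W f}.
Arguments bigmulP {U1 U2 W f} fDl fDr {M1 M2 M3 e1 e2 e3 mk}.

Lemma mkPlainP (U1 U2 W : zmodType) (f : U1 -> U2 -> W) (M1 M2 M3 : eqType) (e1 : M1 -> U1) (e2 : M2 -> U2) (e3 : M3 -> W) (c : M1 -> M2 -> M3)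
  (fDl : forall x y z, f (x + y) z = f x z + f y z) (fDr : forall x y z, f z (x + y) = f z x + f z y)
  (hc : forall m1 m2, e3 (c m1 m2) = f (e1 m1) (e2 m2)) p q :
  evL e3 (mkPlain c p q) = f (sgn p.1 (e1 p.2)) (sgn q.1 (e2 q.2)).
Proof. by rewrite /= addr0 (f_sgn fDl fDr) hc. Qed.
Arguments mkPlainP {U1 U2 W f M1 M2 M3 e1 e2 e3 c}.

Lemma mkCommP (U W : zmodType) (f : U -> U -> W) (M : eqType) (e1 : M -> U) (e3 : M -> W) (code : M -> seq nat) (c : M -> M -> M)
  (fDl : forall x y z, f (x + y) z = f x z + f y z) (fDr : forall x y z, f z (x + y) = f z x + f z y)
  (fC : forall x y, f x y = f y x)
  (hc : forall m1 m2, e3 (c m1 m2) = f (e1 m1) (e1 m2)) p q :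
  evL e3 (mkComm code c p q) = f (sgn p.1 (e1 p.2)) (sgn q.1 (e1 q.2)).
Proof.
rewrite (f_sgn fDl fDr) /mkComm; case: ifP => _ /=; rewrite addr0 hc //.
by rewrite fC.
Qed.
Arguments mkCommP {U W f M e1 e3 code c}.

Lemma mkAntiP (U W : zmodType) (f : U -> U -> W) (M : eqType) (e1 : M -> U) (e3 : M -> W) (code : M -> seq nat) (c : M -> M -> M)
  (fDl : forall x y z, f (x + y) z = f x z + f y z) (fDr : forall x y z, f z (x + y) = f z x + f z y)
  (fA : forall x y, f x y = - f y x) (fxx : forall x, f x x = 0)
  (hc : forall m1 m2, e3 (c m1 m2) = f (e1 m1) (e1 m2)) p q :
  evL e3 (mkAnti code c p q) = f (sgn p.1 (e1 p.2)) (sgn q.1 (e1 q.2)).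
Proof.
rewrite (f_sgn fDl fDr) /mkAnti; case: eqP => [->|_]; first by rewrite fxx; case: (_ (+) _) => //=; rewrite oppr0.
case: ifP => _ /=; rewrite addr0 hc //.
by case: (_ (+) _) => /=; rewrite (fA (e1 q.2)) ?opprK.
Qed.
Arguments mkAntiP {U W f M e1 e3 code c}.

Section Refl.
Variables (K : fieldType) (A V : lmodType K).
Variables (brA prA : A -> A -> A) (brV prV : V -> V -> V) (rho mu : A -> V -> V).
Hypotheses (bADl : forall x y z, brA (x + y) z = brA x z + brA y z) (bADr : forall x y z, brA z (x + y) = brA z x + brA z y)
  (pADl : forall x y z, prA (x + y) z = prA x z + prA y z) (pADr : forall x y z, prA z (x + y) = prA z x + prA z y)
  (bVDl : forall x y z, brV (x + y) z = brV x z + brV y z) (bVDr : forall x y z, brV z (x + y) = brV z x + brV z y)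
  (pVDl : forall x y z, prV (x + y) z = prV x z + prV y z) (pVDr : forall x y z, prV z (x + y) = prV z x + prV z y)
  (rDl : forall x y z, rho (x + y) z = rho x z + rho y z) (rDr : forall x y z, rho z (x + y) = rho z x + rho z y)
  (mDl : forall x y z, mu (x + y) z = mu x z + mu y z) (mDr : forall x y z, mu z (x + y) = mu z x + mu z y)
  (aA : forall x y, brA x y = - brA y x) (aV : forall x y, brV x y = - brV y x)
  (xA : forall x, brA x x = 0) (xV : forall x, brV x x = 0)
  (cA : forall x y, prA x y = prA y x) (cV : forall x y, prV x y = prV y x).
Variables (eA : seq A) (eV : seq V).
Fixpoint evA (s : ea) : A :=
  match s with
  | aX n => nth 0 eA n | aZ => 0 | aAdd s t => evA s + evA t | aNeg s => - evA s
  | aBr s t => brA (evA s) (evA t) | aPr s t => prA (evA s) (evA t)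
  end.
Fixpoint evV (s : ev) : V :=
  match s with
  | vX n => nth 0 eV n | vZ => 0 | vAdd s t => evV s + evV t | vNeg s => - evV s
  | vMuln s n => evV s *+ n
  | vBr s t => brV (evV s) (evV t) | vPr s t => prV (evV s) (evV t)
  | vRho s t => rho (evA s) (evV t) | vMu s t => mu (evA s) (evV t)
  end.
Lemma nfA_sound s : evL evA (nfA s) = evA s.
Proof.
elim: s => [n||s IHs t IHt|s IHs|s IHs t IHt|s IHs t IHt] /=; rewrite ?addr0 //.
- by rewrite evL_cat IHs IHt.
- by rewrite evL_neg IHs.
- by rewrite (bigmulP bADl bADr (mkAntiP (e1 := evA) (e3 := evA) (code := codea) (c := aBr) bADl bADr aA xA (fun _ _ => erefl))) ?IHs ?IHt.
- by rewrite (bigmulP pADl pADr (mkCommP (e1 := evA) (e3 := evA) (code := codea) (c := aPr) pADl pADr cA (fun _ _ => erefl))) ?IHs ?IHt.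
Qed.
Lemma nfV_sound s : evL evV (nfV s) = evV s.
Proof.
elim: s => [n||s IHs t IHt|s IHs|s IHs n|s IHs t IHt|s IHs t IHt|s t IHt|s t IHt] /=; rewrite ?addr0 //.
- by rewrite evL_cat IHs IHt.
- by rewrite evL_neg IHs.
- by rewrite evL_flatten_nseq IHs.
- by rewrite (bigmulP bVDl bVDr (mkAntiP (e1 := evV) (e3 := evV) (code := codev) (c := vBr) bVDl bVDr aV xV (fun _ _ => erefl))) ?IHs ?IHt.
- by rewrite (bigmulP pVDl pVDr (mkCommP (e1 := evV) (e3 := evV) (code := codev) (c := vPr) pVDl pVDr cV (fun _ _ => erefl))) ?IHs ?IHt.
- by rewrite (bigmulP rDl rDr (mkPlainP (e1 := evA) (e2 := evV) (e3 := evV) (c := vRho) rDl rDr (fun _ _ => erefl))) ?nfA_sound ?IHt.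
- by rewrite (bigmulP mDl mDr (mkPlainP (e1 := evA) (e2 := evV) (e3 := evV) (c := vMu) mDl mDr (fun _ _ => erefl))) ?nfA_sound ?IHt.
Qed.
Lemma checkV_sound s : checkV s -> evV s = 0.
Proof using All. by move=> h; rewrite -nfV_sound; apply: cancels_sound. Qed.
End Refl.

Section Lin.
Variables (K : fieldType) (U W : lmodType K).
Lemma lin_add {f : U -> W} : lin f -> forall x y, f (x + y) = f x + f y.
Proof. by move=> h x y; have := h 1 x y; rewrite !scale1r. Qed.
Lemma lin_0 {f : U -> W} : lin f -> f 0 = 0.
Proof. by move=> h; apply: (addrI (f 0)); rewrite -(lin_add h) !addr0. Qed.
Lemma lin_opp {f : U -> W} : lin f -> forall x, f (- x) = - f x.
Proof. by move=> h x; apply: (addrI (f x)); rewrite -(lin_add h) !subrr (lin_0 h). Qed.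
End Lin.
Arguments lin_add {K U W f}.
Arguments lin_0 {K U W f}.
Arguments lin_opp {K U W f}.

Section Emb.
Variables (K : fieldType) (V : vectType K).
Definition emb (v : V) : {poly K} := rVpoly (v2r v).
Lemma emb_inj : injective emb.
Proof. move=> u w E; apply: v2r_inj; exact: (can_inj (@rVpolyK K _)). Qed.
Lemma embD u w : emb (u + w) = emb u + emb w. Proof. by rewrite /emb !raddfD. Qed.
Lemma embN u : emb (- u) = - emb u. Proof. by rewrite /emb !raddfN. Qed.
Lemma embz u k : emb (u *~ k) = emb u *~ k. Proof. by rewrite /emb !raddfMz. Qed.
Lemma embZ k u : emb (k *: u) = k%:P * emb u. Proof. by rewrite /emb !linearZ /= mul_polyC. Qed.
Lemma embn u k : emb (u *+ k) = emb u *+ k. Proof. by rewrite /emb !raddfMn. Qed.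
End Emb.

Lemma eq_sub0 (V : zmodType) (u w : V) : u = w -> 0 = u - w.
Proof. by move=> ->; rewrite subrr. Qed.
Arguments eq_sub0 {V u w}.

Section Gen.
Variables (K : fieldType) (A : lmodType K) (V : vectType K).
Variables (brA prA : A -> A -> A) (brV prV : V -> V -> V) (rho mu : A -> V -> V).
Hypotheses (hK : [pchar K] =i pred0).
Hypotheses (bbA : bilin brA) (bpA : bilin prA) (bbV : bilin brV) (bpV : bilin prV)
  (lrho : lin_end rho) (lmu : lin_end mu)
  (aA : forall x y, brA x y = - brA y x) (aV : forall x y, brV x y = - brV y x)
  (cA : forall x y, prA x y = prA y x) (cV : forall x y, prV x y = prV y x).

Lemma linl {U W : lmodType K} {f : U -> U -> W} : bilin f -> forall z, lin (f^~ z).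
Proof. by case=> h _ z a x y; rewrite h. Qed.
Lemma linr {U W : lmodType K} {f : U -> U -> W} : bilin f -> forall z, lin (f z).
Proof. by case=> _ h z a x y; rewrite h. Qed.
Lemma linel {f : A -> V -> V} : lin_end f -> forall v, lin (f^~ v).
Proof. by case=> _ h z a x y; rewrite h. Qed.
Lemma liner {f : A -> V -> V} : lin_end f -> forall x, lin (f x).
Proof. by case=> h _ x; exact: h. Qed.

Lemma brADl x y z : brA (x + y) z = brA x z + brA y z. Proof. exact: (lin_add (linl bbA z) x y). Qed.
Lemma brADr x y z : brA z (x + y) = brA z x + brA z y. Proof. exact: (lin_add (linr bbA z) x y). Qed.
Lemma brANl x z : brA (- x) z = - brA x z. Proof. exact: (lin_opp (linl bbA z) x). Qed.
Lemma brANr x z : brA z (- x) = - brA z x. Proof. exact: (lin_opp (linr bbA z) x). Qed.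
Lemma brA0l z : brA 0 z = 0. Proof. exact: (lin_0 (linl bbA z)). Qed.
Lemma brA0r z : brA z 0 = 0. Proof. exact: (lin_0 (linr bbA z)). Qed.
Lemma prADl x y z : prA (x + y) z = prA x z + prA y z. Proof. exact: (lin_add (linl bpA z) x y). Qed.
Lemma prADr x y z : prA z (x + y) = prA z x + prA z y. Proof. exact: (lin_add (linr bpA z) x y). Qed.
Lemma prANl x z : prA (- x) z = - prA x z. Proof. exact: (lin_opp (linl bpA z) x). Qed.
Lemma prANr x z : prA z (- x) = - prA z x. Proof. exact: (lin_opp (linr bpA z) x). Qed.
Lemma prA0l z : prA 0 z = 0. Proof. exact: (lin_0 (linl bpA z)). Qed.
Lemma prA0r z : prA z 0 = 0. Proof. exact: (lin_0 (linr bpA z)). Qed.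
Lemma brVDl x y z : brV (x + y) z = brV x z + brV y z. Proof. exact: (lin_add (linl bbV z) x y). Qed.
Lemma brVDr x y z : brV z (x + y) = brV z x + brV z y. Proof. exact: (lin_add (linr bbV z) x y). Qed.
Lemma brVNl x z : brV (- x) z = - brV x z. Proof. exact: (lin_opp (linl bbV z) x). Qed.
Lemma brVNr x z : brV z (- x) = - brV z x. Proof. exact: (lin_opp (linr bbV z) x). Qed.
Lemma brV0l z : brV 0 z = 0. Proof. exact: (lin_0 (linl bbV z)). Qed.
Lemma brV0r z : brV z 0 = 0. Proof. exact: (lin_0 (linr bbV z)). Qed.
Lemma prVDl x y z : prV (x + y) z = prV x z + prV y z. Proof. exact: (lin_add (linl bpV z) x y). Qed.
Lemma prVDr x y z : prV z (x + y) = prV z x + prV z y. Proof. exact: (lin_add (linr bpV z) x y). Qed.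
Lemma prVNl x z : prV (- x) z = - prV x z. Proof. exact: (lin_opp (linl bpV z) x). Qed.
Lemma prVNr x z : prV z (- x) = - prV z x. Proof. exact: (lin_opp (linr bpV z) x). Qed.
Lemma prV0l z : prV 0 z = 0. Proof. exact: (lin_0 (linl bpV z)). Qed.
Lemma prV0r z : prV z 0 = 0. Proof. exact: (lin_0 (linr bpV z)). Qed.
Lemma rhoDl x y z : rho (x + y) z = rho x z + rho y z. Proof. exact: (lin_add (linel lrho z) x y). Qed.
Lemma rhoDr x y z : rho z (x + y) = rho z x + rho z y. Proof. exact: (lin_add (liner lrho z) x y). Qed.
Lemma rhoNl x z : rho (- x) z = - rho x z. Proof. exact: (lin_opp (linel lrho z) x). Qed.
Lemma rhoNr x z : rho z (- x) = - rho z x. Proof. exact: (lin_opp (liner lrho z) x). Qed.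
Lemma rho0l z : rho 0 z = 0. Proof. exact: (lin_0 (linel lrho z)). Qed.
Lemma rho0r z : rho z 0 = 0. Proof. exact: (lin_0 (liner lrho z)). Qed.
Lemma muDl x y z : mu (x + y) z = mu x z + mu y z. Proof. exact: (lin_add (linel lmu z) x y). Qed.
Lemma muDr x y z : mu z (x + y) = mu z x + mu z y. Proof. exact: (lin_add (liner lmu z) x y). Qed.
Lemma muNl x z : mu (- x) z = - mu x z. Proof. exact: (lin_opp (linel lmu z) x). Qed.
Lemma muNr x z : mu z (- x) = - mu z x. Proof. exact: (lin_opp (liner lmu z) x). Qed.
Lemma mu0l z : mu 0 z = 0. Proof. exact: (lin_0 (linel lmu z)). Qed.
Lemma mu0r z : mu z 0 = 0. Proof. exact: (lin_0 (liner lmu z)). Qed.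

Lemma two_neq0 : (2%:R : K) != 0.
Proof. by move/pcharf0P: hK => ->. Qed.

Lemma brAxx x : brA x x = 0.
Proof.
have h : (2%:R : K) *: brA x x = 0 by rewrite scaler_nat mulr2n {1}aA addNr.
by move/eqP: h; rewrite scaler_eq0 (negbTE two_neq0) => /eqP.
Qed.
Lemma brVxx x : brV x x = 0.
Proof.
have h : (2%:R : K) *: brV x x = 0 by rewrite scaler_nat mulr2n {1}aV addNr.
by move/eqP: h; rewrite scaler_eq0 (negbTE two_neq0) => /eqP.
Qed.

Lemma mulrn_zero (n : nat) (v : V) : (n != 0)%N -> v *+ n = 0 -> v = 0.
Proof.
move=> hn; rewrite -scaler_nat => /eqP; rewrite scaler_eq0.
by move/pcharf0P: hK => ->; rewrite (negbTE hn) => /eqP.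
Qed.

Ltac push := rewrite ?(brADl, brADr, brANl, brANr, brA0l, brA0r,
  prADl, prADr, prANl, prANr, prA0l, prA0r,
  brVDl, brVDr, brVNl, brVNr, brV0l, brV0r,
  prVDl, prVDr, prVNl, prVNr, prV0l, prV0r,
  rhoDl, rhoDr, rhoNl, rhoNr, rho0l, rho0r,
  muDl, muDr, muNl, muNr, mu0l, mu0r, opprK, oppr0, addr0, add0r, subr0, sub0r).


Ltac idx x l := lazymatch l with
 | x :: _ => constr:(0%N)
 | _ :: ?r => let n := idx x r in constr:(S n)
 end.
Ltac reifyA t eA := lazymatch t with
 | 0 => constr:(aZ)
 | ?s + ?u => let s' := reifyA s eA in let u' := reifyA u eA in constr:(aAdd s' u')
 | - ?s => let s' := reifyA s eA in constr:(aNeg s')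
 | brA ?s ?u => let s' := reifyA s eA in let u' := reifyA u eA in constr:(aBr s' u')
 | prA ?s ?u => let s' := reifyA s eA in let u' := reifyA u eA in constr:(aPr s' u')
 | _ => let n := idx t eA in constr:(aX n)
 end.
Ltac reifyV t eA eV := lazymatch t with
 | 0 => constr:(vZ)
 | ?s + ?u => let s' := reifyV s eA eV in let u' := reifyV u eA eV in constr:(vAdd s' u')
 | - ?s => let s' := reifyV s eA eV in constr:(vNeg s')
 | ?s *+ ?n => let s' := reifyV s eA eV in constr:(vMuln s' n)
 | brV ?s ?u => let s' := reifyV s eA eV in let u' := reifyV u eA eV in constr:(vBr s' u')
 | prV ?s ?u => let s' := reifyV s eA eV in let u' := reifyV u eA eV in constr:(vPr s' u')
 | rho ?s ?u => let s' := reifyA s eA in let u' := reifyV u eA eV in constr:(vRho s' u')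
 | mu ?s ?u => let s' := reifyA s eA in let u' := reifyV u eA eV in constr:(vMu s' u')
 | _ => let n := idx t eV in constr:(vX n)
 end.
Ltac refl_tac eA eV :=
  rewrite /jac /dsum_br /dsum_pr /=;
  apply/eqP; rewrite -subr_eq0; apply/eqP;
  lazymatch goal with |- ?t = 0 => let e := reifyV t eA eV in
    apply: (@checkV_sound K A V brA prA brV prV rho mu brADl brADr prADl prADr brVDl brVDr prVDl prVDr
      rhoDl rhoDr muDl muDr aA aV brAxx brVxx cA cV eA eV e); vm_compute; reflexivity end.
Lemma rhoZDl k x y v : rho (k *: x + y) v = k *: rho x v + rho y v. Proof. by case: lrho => _ h; rewrite h. Qed.
Lemma rhoZDr k x y v : rho v (k *: x + y) = k *: rho v x + rho v y. Proof. by case: lrho => h _; rewrite h. Qed.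
Lemma muZDl k x y v : mu (k *: x + y) v = k *: mu x v + mu y v. Proof. by case: lmu => _ h; rewrite h. Qed.
Lemma muZDr k x y v : mu v (k *: x + y) = k *: mu v x + mu v y. Proof. by case: lmu => h _; rewrite h. Qed.
Lemma brAZDl k x y v : brA (k *: x + y) v = k *: brA x v + brA y v. Proof. by case: bbA => h _; rewrite h. Qed.
Lemma brAZDr k x y v : brA v (k *: x + y) = k *: brA v x + brA v y. Proof. by case: bbA => _ h; rewrite h. Qed.
Lemma prAZDl k x y v : prA (k *: x + y) v = k *: prA x v + prA y v. Proof. by case: bpA => h _; rewrite h. Qed.
Lemma prAZDr k x y v : prA v (k *: x + y) = k *: prA v x + prA v y. Proof. by case: bpA => _ h; rewrite h. Qed.
Lemma brVZDl k x y v : brV (k *: x + y) v = k *: brV x v + brV y v. Proof. by case: bbV => h _; rewrite h. Qed.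
Lemma brVZDr k x y v : brV v (k *: x + y) = k *: brV v x + brV v y. Proof. by case: bbV => _ h; rewrite h. Qed.
Lemma prVZDl k x y v : prV (k *: x + y) v = k *: prV x v + prV y v. Proof. by case: bpV => h _; rewrite h. Qed.
Lemma prVZDr k x y v : prV v (k *: x + y) = k *: prV v x + prV v y. Proof. by case: bpV => _ h; rewrite h. Qed.

Lemma dbr_bilin : bilin (dsum_br brA brV rho).
Proof using All.
split=> [[z1 z2] k [x1 x2] [y1 y2] | [z1 z2] k [x1 x2] [y1 y2]]; rewrite /dsum_br /=; congr pair;
  rewrite ?(rhoZDl, rhoZDr, brAZDl, brAZDr, brVZDl, brVZDr) //;
  apply: emb_inj; rewrite !(embD, embN, embZ); ring.
Qed.

Lemma dpr_bilin : bilin (dsum_pr prA prV mu).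
Proof using All.
split=> [[z1 z2] k [x1 x2] [y1 y2] | [z1 z2] k [x1 x2] [y1 y2]]; rewrite /dsum_pr /=; congr pair;
  rewrite ?(muZDl, muZDr, prAZDl, prAZDr, prVZDl, prVZDr) //;
  apply: emb_inj; rewrite !(embD, embN, embZ); ring.
Qed.

Lemma dbr_anti p q : dsum_br brA brV rho p q = - dsum_br brA brV rho q p.
Proof using All.
case: p q => [x a] [y b]; rewrite /dsum_br /=; congr pair; first exact: aA.
rewrite (aV a b); apply: emb_inj; rewrite !(embD, embN); ring.
Qed.

Lemma dpr_comm p q : dsum_pr prA prV mu p q = dsum_pr prA prV mu q p.
Proof using All.
case: p q => [x a] [y b]; rewrite /dsum_pr /= (cA x y) (cV a b); congr pair.
by rewrite (addrC (mu x b)).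
Qed.

Lemma fwd_mal (hrep : forall (x : A) (y : A) (z : A) (a : V), (rho (brA (brA x y) z) a) = ((((rho z (rho y (rho x a))) - (rho y (rho x (rho z a)))) + (rho x (rho (brA y z) a))) + (rho (brA x z) (rho y a)))) (h2 : forall (x : A) (y : A) (a : V) (b : V), (rho (brA x y) (brV a b)) = ((((rho x (brV (rho y a) b)) - (brV (rho y (rho x a)) b)) - (brV (rho x (rho y b)) a)) + (rho y (brV (rho x b) a)))) (h2b : forall (x : A) (y : A) (a : V) (b : V), (brV (rho x a) (rho y b)) = ((((brV (rho (brA x y) a) b) - (rho x (brV (rho y a) b))) + (rho y (rho x (brV a b)))) + (brV (rho y (rho x b)) a))) (h3 : forall (x : A) (a : V) (b : V) (c : V), (brV (rho x a) (brV b c)) = ((((brV (brV (rho x b) a) c) - (rho x (brV (brV b a) c))) - (brV (rho x (brV a c)) b)) - (brV (brV (rho x c) b) a))) (hmV : forall (a : V) (b : V) (c : V), (jac brV a b (brV a c)) = (brV (jac brV a b c) a)) (x y z : A) (a b c : V) :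
  (jac (dsum_br brA brV rho) (x, a) (y, b) ((dsum_br brA brV rho) (x, a) (z, c))).2 = ((dsum_br brA brV rho) (jac (dsum_br brA brV rho) (x, a) (y, b) (z, c)) (x, a)).2.
Proof using All.
apply/eqP; rewrite -subr_eq0; apply/eqP.
have E : forall D0 D1 D2 D3 D4 D5 D6 D7 D8 D9 D10 D11 D12 D13 D14 D15 D16 D17 : V, D0 = (rho (brA (brA x x) y) c) - ((((rho y (rho x (rho x c))) - (rho x (rho x (rho y c)))) + (rho x (rho (brA x y) c))) + (rho (brA x y) (rho x c))) -> D1 = (rho (brA (brA x x) z) b) - ((((rho z (rho x (rho x b))) - (rho x (rho x (rho z b)))) + (rho x (rho (brA x z) b))) + (rho (brA x z) (rho x b))) -> D2 = (rho (brA (brA x y) z) a) - ((((rho z (rho y (rho x a))) - (rho y (rho x (rho z a)))) + (rho x (rho (brA y z) a))) + (rho (brA x z) (rho y a))) -> D3 = (rho (brA (brA x z) x) b) - ((((rho x (rho z (rho x b))) - (rho z (rho x (rho x b)))) + (rho x (rho (brA z x) b))) + (rho (brA x x) (rho z b))) -> D4 = (rho (brA (brA y z) x) a) - ((((rho x (rho z (rho y a))) - (rho z (rho y (rho x a)))) + (rho y (rho (brA z x) a))) + (rho (brA y x) (rho z a))) -> D5 = (brV (rho x b) (rho x c)) - ((((brV (rho (brA x x) b) c) - (rho x (brV (rho x b) c))) + (rho x (rho x (brV b c)))) + (brV (rho x (rho x c)) b)) -> D6 = (rho (brA x y) (brV a c)) - ((((rho x (brV (rho y a) c)) - (brV (rho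 y (rho x a)) c)) - (brV (rho x (rho y c)) a)) + (rho y (brV (rho x c) a))) -> D7 = (brV (rho x c) (rho y a)) - ((((brV (rho (brA x y) c) a) - (rho x (brV (rho y c) a))) + (rho y (rho x (brV c a)))) + (brV (rho y (rho x a)) c)) -> D8 = (rho (brA x z) (brV b a)) - ((((rho x (brV (rho z b) a)) - (brV (rho z (rho x b)) a)) - (brV (rho x (rho z a)) b)) + (rho z (brV (rho x a) b))) -> D9 = (brV (rho y a) (rho z a)) - ((((brV (rho (brA y z) a) a) - (rho y (brV (rho z a) a))) + (rho z (rho y (brV a a)))) + (brV (rho z (rho y a)) a)) -> D10 = (brV (rho z a) (rho x b)) - ((((brV (rho (brA z x) a) b) - (rho z (brV (rho x a) b))) + (rho x (rho z (brV a b)))) + (brV (rho x (rho z b)) a)) -> D11 = (brV (rho x a) (brV b c)) - ((((brV (brV (rho x b) a) c) - (rho x (brV (brV b a) c))) - (brV (rho x (brV a c)) b)) - (brV (brV (rho x c) b) a)) -> D12 = (brV (rho x a) (brV c b)) - ((((brV (brV (rho x c) a) b) - (rho x (brV (brV c a) b))) - (brV (rho x (brV a b)) c)) - (brV (brV (rho x b) c) a)) -> D13 = (brV (rho x b) (brV c a)) - ((((brV (brV (rho x c) b) a) - (rho x (brV (brV c b) a))) - (brV (rho x (brV b a)) c)) - (brV (brV (rho x a) c) b)) -> D14 = (brV (rho x c) (brV a b)) - ((((brV (brV (rho x a) c) b) - (rho x (brV (brV a c) b))) - (brV (rho x (brV c b)) a)) - (brV (brV (rho x b) a) c)) -> D15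 = (brV (rho y a) (brV c a)) - ((((brV (brV (rho y c) a) a) - (rho y (brV (brV c a) a))) - (brV (rho y (brV a a)) c)) - (brV (brV (rho y a) c) a)) -> D16 = (brV (rho z a) (brV a b)) - ((((brV (brV (rho z a) a) b) - (rho z (brV (brV a a) b))) - (brV (rho z (brV a b)) a)) - (brV (brV (rho z b) a) a)) -> D17 = (jac brV a b (brV a c)) - (brV (jac brV a b c) a) -> ((jac (dsum_br brA brV rho) (x, a) (y, b) ((dsum_br brA brV rho) (x, a) (z, c))).2 - ((dsum_br brA brV rho) (jac (dsum_br brA brV rho) (x, a) (y, b) (z, c)) (x, a)).2) = 0 - D0 *+ 1 + D1 *+ 1 - D2 *+ 1 + D3 *+ 1 - D4 *+ 1 + D5 *+ 1 + D6 *+ 1 + D7 *+ 1 + D8 *+ 1 + D9 *+ 1 + D10 *+ 1 - D11 *+ 1 - D12 *+ 1 - D13 *+ 1 - D14 *+ 1 + D15 *+ 1 + D16 *+ 1 + D17 *+ 1.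
{ move=> D0 D1 D2 D3 D4 D5 D6 D7 D8 D9 D10 D11 D12 D13 D14 D15 D16 D17 -> -> -> -> -> -> -> -> -> -> -> -> -> -> -> -> -> ->; refl_tac [:: x; y; z] [:: a; b; c]. }
rewrite (E 0 0 0 0 0 0 0 0 0 0 0 0 0 0 0 0 0 0 (eq_sub0 (hrep x x y c)) (eq_sub0 (hrep x x z b)) (eq_sub0 (hrep x y z a)) (eq_sub0 (hrep x z x b)) (eq_sub0 (hrep y z x a)) (eq_sub0 (h2b x x b c)) (eq_sub0 (h2 x y a c)) (eq_sub0 (h2b x y c a)) (eq_sub0 (h2 x z b a)) (eq_sub0 (h2b y z a a)) (eq_sub0 (h2b z x a b)) (eq_sub0 (h3 x a b c)) (eq_sub0 (h3 x a c b)) (eq_sub0 (h3 x b c a)) (eq_sub0 (h3 x c a b)) (eq_sub0 (h3 y a c a)) (eq_sub0 (h3 z a a b)) (eq_sub0 (hmV a b c))).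
by rewrite ?mul0rn ?oppr0 ?addr0 ?subr0.
Qed.
Lemma fwd_assoc (hass : forall (x : A) (y : A) (a : V), (mu (prA x y) a) = (mu x (mu y a))) (hmup : forall (x : A) (a : V) (b : V), (mu x (prV a b)) = (prV (mu x a) b)) (hassV : forall (a : V) (b : V) (c : V), (prV a (prV b c)) = (prV (prV a b) c)) (x y z : A) (a b c : V) :
  ((dsum_pr prA prV mu) (x, a) ((dsum_pr prA prV mu) (y, b) (z, c))).2 = ((dsum_pr prA prV mu) ((dsum_pr prA prV mu) (x, a) (y, b)) (z, c)).2.
Proof using All.
apply/eqP; rewrite -subr_eq0; apply/eqP.
have E : forall D0 D1 D2 D3 D4 D5 D6 D7 D8 : V, D0 = (mu (prA x y) c) - (mu x (mu y c)) -> D1 = (mu (prA x z) b) - (mu x (mu z b)) -> D2 = (mu (prA z x) b) - (mu z (mu x b)) -> D3 = (mu (prA z y) a) - (mu z (mu y a)) -> D4 = (mu x (prV b c)) - (prV (mu x b) c) -> D5 = (mu y (prV a c)) - (prV (mu y a) c) -> D6 = (mu y (prV c a)) - (prV (mu y c) a) -> D7 = (mu z (prV b a)) - (prV (mu z b) a) -> D8 = (prV a (prV b c)) - (prV (prV a b) c) -> (((dsum_pr prA prV mu) (x, a) ((dsum_pr prA prV mu) (y, b) (z, c))).2 - ((dsum_pr prA prV mu) ((dsum_pr prA prV mu) (x, a) (y, b)) (z, c)).2) = 0 - D0 *+ 1 - D1 *+ 1 + D2 *+ 1 + D3 *+ 1 + D4 *+ 1 + D5 *+ 1 - D6 *+ 1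 - D7 *+ 1 + D8 *+ 1.
{ move=> D0 D1 D2 D3 D4 D5 D6 D7 D8 -> -> -> -> -> -> -> -> ->; refl_tac [:: x; y; z] [:: a; b; c]. }
rewrite (E 0 0 0 0 0 0 0 0 0 (eq_sub0 (hass x y c)) (eq_sub0 (hass x z b)) (eq_sub0 (hass z x b)) (eq_sub0 (hass z y a)) (eq_sub0 (hmup x b c)) (eq_sub0 (hmup y a c)) (eq_sub0 (hmup y c a)) (eq_sub0 (hmup z b a)) (eq_sub0 (hassV a b c))).
by rewrite ?mul0rn ?oppr0 ?addr0 ?subr0.
Qed.

Lemma fwd_leib (hrhopr : forall (x : A) (y : A) (a : V), (rho (prA x y) a) = ((mu y (rho x a)) + (mu x (rho y a)))) (hmubr : forall (x : A) (y : A) (a : V), (mu (brA x y) a) = ((rho x (mu y a)) - (mu y (rho x a)))) (hder : forall (x : A) (a : V) (b : V), (rho x (prV a b)) = ((prV (rho x a) b) + (prV a (rho x b)))) (hbrmu : forall (x : A) (a : V) (b : V), (brV a (mu x b)) = ((- (prV (rho x a) b)) + (mu x (brV a b)))) (hleibV : forall (a : V) (b : V) (c : V), (brV a (prV b c)) = ((prV (brV a b) c) + (prV b (brV a c)))) (x y z : A) (a b c : V) :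
  ((dsum_br brA brV rho) (x, a) ((dsum_pr prA prV mu) (y, b) (z, c))).2 = (((dsum_pr prA prV mu) ((dsum_br brA brV rho) (x, a) (y, b)) (z, c)) + ((dsum_pr prA prV mu) (y, b) ((dsum_br brA brV rho) (x, a) (z, c)))).2.
Proof using All.
apply/eqP; rewrite -subr_eq0; apply/eqP.
have E : forall D0 D1 D2 D3 D4 D5 D6 : V, D0 = (mu (brA x y) c) - ((rho x (mu y c)) - (mu y (rho x c))) -> D1 = (mu (brA x z) b) - ((rho x (mu z b)) - (mu z (rho x b))) -> D2 = (rho (prA y z) a) - ((mu z (rho y a)) + (mu y (rho z a))) -> D3 = (rho x (prV b c)) - ((prV (rho x b) c) + (prV b (rho x c))) -> D4 = (brV a (mu y c)) - ((- (prV (rho y a) c)) + (mu y (brV a c))) -> D5 = (brV a (mu z b)) - ((- (prV (rho z a) b)) + (mu z (brV a b))) -> D6 = (brV a (prV b c)) - ((prV (brV a b) c) + (prV b (brV a c))) -> (((dsum_br brA brV rho) (x, a) ((dsum_pr prA prV mu) (y, b) (z, c))).2 - (((dsum_pr prA prV mu) ((dsum_br brA brV rho) (x, a) (y, b)) (z, c)) + ((dsum_pr prA prV mu) (y, b) ((dsum_br brA brV rho) (x, a) (z, c)))).2) = 0 - D0 *+ 1 - D1 *+ 1 - D2 *+ 1 + D3 *+ 1 + D4 *+ 1 + D5 *+ 1 + D6 *+ 1.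
{ move=> D0 D1 D2 D3 D4 D5 D6 -> -> -> -> -> -> ->; refl_tac [:: x; y; z] [:: a; b; c]. }
rewrite (E 0 0 0 0 0 0 0 (eq_sub0 (hmubr x y c)) (eq_sub0 (hmubr x z b)) (eq_sub0 (hrhopr y z a)) (eq_sub0 (hder x b c)) (eq_sub0 (hbrmu y a c)) (eq_sub0 (hbrmu z a b)) (eq_sub0 (hleibV a b c))).
by rewrite ?mul0rn ?oppr0 ?addr0 ?subr0.
Qed.
Lemma bk_rep (hmal : forall X Y Z : A * V, jac (dsum_br brA brV rho) X Y ((dsum_br brA brV rho) X Z) = (dsum_br brA brV rho) (jac (dsum_br brA brV rho) X Y Z) X) (x : A) (y : A) (z : A) (a : V) :
  (rho (brA (brA x y) z) a) = ((((rho z (rho y (rho x a))) - (rho y (rho x (rho z a)))) + (rho x (rho (brA y z) a))) + (rho (brA x z) (rho y a))).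
Proof using All.
apply/eqP; rewrite -subr_eq0; apply/eqP.
apply: (@mulrn_zero 2) => //.
have E : forall D0 D1 D2 D3 D4 D5 D6 D7 : V, D0 = (jac (dsum_br brA brV rho) (x, 0) (z, 0) ((dsum_br brA brV rho) (x, 0) (0, a))).2 - ((dsum_br brA brV rho) (jac (dsum_br brA brV rho) (x, 0) (z, 0) (0, a)) (x, 0)).2 -> D1 = (jac (dsum_br brA brV rho) (x, 0) (0, a) ((dsum_br brA brV rho) (x, 0) (y, 0))).2 - ((dsum_br brA brV rho) (jac (dsum_br brA brV rho) (x, 0) (0, a) (y, 0)) (x, 0)).2 -> D2 = (jac (dsum_br brA brV rho) (y, 0) (z, 0) ((dsum_br brA brV rho) (y, 0) (0, a))).2 - ((dsum_br brA brV rho) (jac (dsum_br brA brV rho) (y, 0) (z, 0) (0, a)) (y, 0)).2 -> D3 = (jac (dsum_br brA brV rho) (z, 0) (0, a) ((dsum_br brA brV rho) (z, 0) (y, 0))).2 - ((dsum_br brA brV rho) (jac (dsum_br brA brV rho) (z, 0) (0, a) (y, 0)) (z, 0)).2 -> D4 = (jac (dsum_br brA brV rho) (0, a) (y, 0) ((dsum_br brA brV rho) (0, a) (z, 0))).2 - ((dsum_br brA brV rho) (jac (dsum_br brA brV rho) (0, a) (y, 0) (z, 0)) (0, a)).2 -> D5 = (jac (dsum_br brA brV rho) ((x + y), 0) (z, 0) ((dsum_br brA brV rho) ((x + y), 0) (0, a))).2 - ((dsum_br brA brV rho) (jac (dsum_br brA brV rho) ((x + y), 0) (z, 0) (0, a))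 ((x + y), 0)).2 -> D6 = (jac (dsum_br brA brV rho) ((x + z), 0) (0, a) ((dsum_br brA brV rho) ((x + z), 0) (y, 0))).2 - ((dsum_br brA brV rho) (jac (dsum_br brA brV rho) ((x + z), 0) (0, a) (y, 0)) ((x + z), 0)).2 -> D7 = (jac (dsum_br brA brV rho) (x, a) (y, 0) ((dsum_br brA brV rho) (x, a) (z, 0))).2 - ((dsum_br brA brV rho) (jac (dsum_br brA brV rho) (x, a) (y, 0) (z, 0)) (x, a)).2 -> ((rho (brA (brA x y) z) a) - ((((rho z (rho y (rho x a))) - (rho y (rho x (rho z a)))) + (rho x (rho (brA y z) a))) + (rho (brA x z) (rho y a)))) *+ 2 = 0 + D0 *+ 1 - D1 *+ 1 + D2 *+ 1 - D3 *+ 1 + D4 *+ 1 - D5 *+ 1 + D6 *+ 1 - D7 *+ 1.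
{ move=> D0 D1 D2 D3 D4 D5 D6 D7 -> -> -> -> -> -> -> ->; refl_tac [:: x; y; z] [:: a]. }
rewrite (E 0 0 0 0 0 0 0 0 (eq_sub0 (congr1 snd (hmal (x, 0) (z, 0) (0, a)))) (eq_sub0 (congr1 snd (hmal (x, 0) (0, a) (y, 0)))) (eq_sub0 (congr1 snd (hmal (y, 0) (z, 0) (0, a)))) (eq_sub0 (congr1 snd (hmal (z, 0) (0, a) (y, 0)))) (eq_sub0 (congr1 snd (hmal (0, a) (y, 0) (z, 0)))) (eq_sub0 (congr1 snd (hmal ((x + y), 0) (z, 0) (0, a)))) (eq_sub0 (congr1 snd (hmal ((x + z), 0) (0, a) (y, 0)))) (eq_sub0 (congr1 snd (hmal (x, a) (y, 0) (z, 0))))).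
by rewrite ?mul0rn ?oppr0 ?addr0 ?subr0.
Qed.

Lemma bk_2 (hmal : forall X Y Z : A * V, jac (dsum_br brA brV rho) X Y ((dsum_br brA brV rho) X Z) = (dsum_br brA brV rho) (jac (dsum_br brA brV rho) X Y Z) X) (x : A) (y : A) (a : V) (b : V) :
  (rho (brA x y) (brV a b)) = ((((rho x (brV (rho y a) b)) - (brV (rho y (rho x a)) b)) - (brV (rho x (rho y b)) a)) + (rho y (brV (rho x b) a))).
Proof using All.
apply/eqP; rewrite -subr_eq0; apply/eqP.
apply: (@mulrn_zero 2) => //.
have E : forall D0 D1 D2 D3 D4 D5 D6 D7 D8 D9 D10 D11 : V, D0 = (jac (dsum_br brA brV rho) (x, 0) (y, 0) ((dsum_br brA brV rho) (x, 0) (0, b))).2 - ((dsum_br brA brV rho) (jac (dsum_br brA brV rho) (x, 0) (y, 0) (0, b)) (x, 0)).2 -> D1 = (jac (dsum_br brA brV rho) (x, 0) (0, b) ((dsum_br brA brV rho) (x, 0) (y, 0))).2 - ((dsum_br brA brV rho) (jac (dsum_br brA brV rho) (x, 0) (0, b) (y, 0)) (x, 0)).2 -> D2 = (jac (dsum_br brA brV rho) (x, 0) (0, b) ((dsum_br brA brV rho) (x, 0) (0, a))).2 - ((dsum_br brA brV rho) (jac (dsum_br brA brV rho) (x, 0) (0, b) (0, a)) (x, 0)).2 -> D3 = (jac (dsum_br brA brV rho) (y, 0) (0, b) ((dsum_br brA brV rho) (y, 0) (0, a))).2 - ((dsum_br brA brV rho) (jac (dsum_br brA brV rho) (y, 0)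 (0, b) (0, a)) (y, 0)).2 -> D4 = (jac (dsum_br brA brV rho) (0, a) (x, 0) ((dsum_br brA brV rho) (0, a) (y, 0))).2 - ((dsum_br brA brV rho) (jac (dsum_br brA brV rho) (0, a) (x, 0) (y, 0)) (0, a)).2 -> D5 = (jac (dsum_br brA brV rho) (0, a) (y, 0) ((dsum_br brA brV rho) (0, a) (0, b))).2 - ((dsum_br brA brV rho) (jac (dsum_br brA brV rho) (0, a) (y, 0) (0, b)) (0, a)).2 -> D6 = (jac (dsum_br brA brV rho) (0, a) (0, b) ((dsum_br brA brV rho) (0, a) (y, 0))).2 - ((dsum_br brA brV rho) (jac (dsum_br brA brV rho) (0, a) (0, b) (y, 0)) (0, a)).2 -> D7 = (jac (dsum_br brA brV rho) (0, b) (x, 0) ((dsum_br brA brV rho) (0, b) (y, 0))).2 - ((dsum_br brA brV rho) (jac (dsum_br brA brV rho) (0, b) (x, 0) (y, 0)) (0, b)).2 -> D8 = (jac (dsum_br brA brV rho) ((x + y), 0) (0, b) ((dsum_br brA brV rho) ((x + y), 0) (0, a))).2 - ((dsum_br brA brV rho) (jac (dsum_br brA brV rho) ((x + y), 0) (0, b) (0, a)) ((x + y), 0)).2 -> D9 = (jac (dsum_br brA brV rho) (0, (a + b)) (x, 0) ((dsum_br brA brV rho) (0, (a + b)) (y, 0))).2 - ((dsum_br brA brV rho) (jac (dsum_br brA brV rho) (0, (a + b)) (x, 0) (y, 0)) (0, (a + b))).2 -> D10 = (jac (dsum_br brA brV rho) (x, a) (y, 0) ((dsum_br brA brV rho) (x,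 a) (0, b))).2 - ((dsum_br brA brV rho) (jac (dsum_br brA brV rho) (x, a) (y, 0) (0, b)) (x, a)).2 -> D11 = (jac (dsum_br brA brV rho) (x, a) (0, b) ((dsum_br brA brV rho) (x, a) (y, 0))).2 - ((dsum_br brA brV rho) (jac (dsum_br brA brV rho) (x, a) (0, b) (y, 0)) (x, a)).2 -> ((rho (brA x y) (brV a b)) - ((((rho x (brV (rho y a) b)) - (brV (rho y (rho x a)) b)) - (brV (rho x (rho y b)) a)) + (rho y (brV (rho x b) a)))) *+ 2 = 0 - D0 *+ 1 + D1 *+ 1 + D2 *+ 1 + D3 *+ 1 + D4 *+ 1 - D5 *+ 1 + D6 *+ 1 + D7 *+ 1 - D8 *+ 1 - D9 *+ 1 + D10 *+ 1 - D11 *+ 1.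
{ move=> D0 D1 D2 D3 D4 D5 D6 D7 D8 D9 D10 D11 -> -> -> -> -> -> -> -> -> -> -> ->; refl_tac [:: x; y] [:: a; b]. }
rewrite (E 0 0 0 0 0 0 0 0 0 0 0 0 (eq_sub0 (congr1 snd (hmal (x, 0) (y, 0) (0, b)))) (eq_sub0 (congr1 snd (hmal (x, 0) (0, b) (y, 0)))) (eq_sub0 (congr1 snd (hmal (x, 0) (0, b) (0, a)))) (eq_sub0 (congr1 snd (hmal (y, 0) (0, b) (0, a)))) (eq_sub0 (congr1 snd (hmal (0, a) (x, 0) (y, 0)))) (eq_sub0 (congr1 snd (hmal (0, a) (y, 0) (0, b)))) (eq_sub0 (congr1 snd (hmal (0, a) (0, b) (y, 0)))) (eq_sub0 (congr1 snd (hmal (0, b) (x, 0) (y, 0)))) (eq_sub0 (congr1 snd (hmal ((x + y), 0) (0, b) (0, a)))) (eq_sub0 (congr1 snd (hmal (0, (a + b)) (x, 0) (y, 0)))) (eq_sub0 (congr1 snd (hmal (x, a) (y, 0) (0, b)))) (eq_sub0 (congr1 snd (hmal (x, a) (0, b) (y, 0))))).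
by rewrite ?mul0rn ?oppr0 ?addr0 ?subr0.
Qed.

Lemma bk_2b (hmal : forall X Y Z : A * V, jac (dsum_br brA brV rho) X Y ((dsum_br brA brV rho) X Z) = (dsum_br brA brV rho) (jac (dsum_br brA brV rho) X Y Z) X) (x : A) (y : A) (a : V) (b : V) :
  (brV (rho x a) (rho y b)) = ((((brV (rho (brA x y) a) b) - (rho x (brV (rho y a) b))) + (rho y (rho x (brV a b)))) + (brV (rho y (rho x b)) a)).
Proof using All.
apply/eqP; rewrite -subr_eq0; apply/eqP.
apply: (@mulrn_zero 2) => //.
have E : forall D0 D1 D2 D3 D4 D5 D6 D7 D8 D9 D10 D11 : V, D0 = (jac (dsum_br brA brV rho) (x, 0) (y, 0) ((dsum_br brA brV rho) (x, 0) (0, b))).2 - ((dsum_br brA brV rho) (jac (dsum_br brA brV rho) (x, 0) (y, 0) (0, b)) (x, 0)).2 -> D1 = (jac (dsum_br brA brV rho) (x, 0) (0, b) ((dsum_br brA brV rho) (x, 0) (y, 0))).2 - ((dsum_br brA brV rho) (jac (dsum_br brA brV rho) (x, 0) (0, b) (y, 0)) (x, 0)).2 -> D2 = (jac (dsum_br brA brV rho) (x, 0) (0, b) ((dsum_br brA brV rho) (x, 0) (0, a))).2 - ((dsum_br brA brV rho) (jac (dsum_br brA brV rho) (x, 0) (0, b) (0, a)) (x, 0)).2 -> D3 = (jac (dsum_br brA brV rho) (y, 0) (0, b) ((dsum_br brA brV rho) (y, 0) (0, a))).2 - ((dsum_br brA brV rho) (jac (dsum_br brA brV rho) (y, 0)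 (0, b) (0, a)) (y, 0)).2 -> D4 = (jac (dsum_br brA brV rho) (0, a) (x, 0) ((dsum_br brA brV rho) (0, a) (y, 0))).2 - ((dsum_br brA brV rho) (jac (dsum_br brA brV rho) (0, a) (x, 0) (y, 0)) (0, a)).2 -> D5 = (jac (dsum_br brA brV rho) (0, a) (y, 0) ((dsum_br brA brV rho) (0, a) (0, b))).2 - ((dsum_br brA brV rho) (jac (dsum_br brA brV rho) (0, a) (y, 0) (0, b)) (0, a)).2 -> D6 = (jac (dsum_br brA brV rho) (0, a) (0, b) ((dsum_br brA brV rho) (0, a) (y, 0))).2 - ((dsum_br brA brV rho) (jac (dsum_br brA brV rho) (0, a) (0, b) (y, 0)) (0, a)).2 -> D7 = (jac (dsum_br brA brV rho) (0, b) (x, 0) ((dsum_br brA brV rho) (0, b) (y, 0))).2 - ((dsum_br brA brV rho) (jac (dsum_br brA brV rho) (0, b) (x, 0) (y, 0)) (0, b)).2 -> D8 = (jac (dsum_br brA brV rho) ((x + y), 0) (0, b) ((dsum_br brA brV rho) ((x + y), 0) (0, a))).2 - ((dsum_br brA brV rho) (jac (dsum_br brA brV rho) ((x + y), 0) (0, b) (0, a)) ((x + y), 0)).2 -> D9 = (jac (dsum_br brA brV rho) (0, (a + b)) (x, 0) ((dsum_br brA brV rho) (0, (a + b)) (y, 0))).2 - ((dsum_br brA brV rho) (jac (dsum_br brA brV rho) (0, (a + b)) (x, 0) (y, 0)) (0, (a + b))).2 -> D10 = (jac (dsum_br brA brV rho) (x, a) (y, 0) ((dsum_br brA brV rho) (x,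 a) (0, b))).2 - ((dsum_br brA brV rho) (jac (dsum_br brA brV rho) (x, a) (y, 0) (0, b)) (x, a)).2 -> D11 = (jac (dsum_br brA brV rho) (x, a) (0, b) ((dsum_br brA brV rho) (x, a) (y, 0))).2 - ((dsum_br brA brV rho) (jac (dsum_br brA brV rho) (x, a) (0, b) (y, 0)) (x, a)).2 -> ((brV (rho x a) (rho y b)) - ((((brV (rho (brA x y) a) b) - (rho x (brV (rho y a) b))) + (rho y (rho x (brV a b)))) + (brV (rho y (rho x b)) a))) *+ 2 = 0 + D0 *+ 1 + D1 *+ 1 + D2 *+ 1 + D3 *+ 1 - D4 *+ 1 + D5 *+ 1 + D6 *+ 1 - D7 *+ 1 - D8 *+ 1 + D9 *+ 1 - D10 *+ 1 - D11 *+ 1.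
{ move=> D0 D1 D2 D3 D4 D5 D6 D7 D8 D9 D10 D11 -> -> -> -> -> -> -> -> -> -> -> ->; refl_tac [:: x; y] [:: a; b]. }
rewrite (E 0 0 0 0 0 0 0 0 0 0 0 0 (eq_sub0 (congr1 snd (hmal (x, 0) (y, 0) (0, b)))) (eq_sub0 (congr1 snd (hmal (x, 0) (0, b) (y, 0)))) (eq_sub0 (congr1 snd (hmal (x, 0) (0, b) (0, a)))) (eq_sub0 (congr1 snd (hmal (y, 0) (0, b) (0, a)))) (eq_sub0 (congr1 snd (hmal (0, a) (x, 0) (y, 0)))) (eq_sub0 (congr1 snd (hmal (0, a) (y, 0) (0, b)))) (eq_sub0 (congr1 snd (hmal (0, a) (0, b) (y, 0)))) (eq_sub0 (congr1 snd (hmal (0, b) (x, 0) (y, 0)))) (eq_sub0 (congr1 snd (hmal ((x + y), 0) (0, b) (0, a)))) (eq_sub0 (congr1 snd (hmal (0, (a + b)) (x, 0) (y, 0)))) (eq_sub0 (congr1 snd (hmal (x, a) (y, 0) (0, b)))) (eq_sub0 (congr1 snd (hmal (x, a) (0, b) (y, 0))))).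
by rewrite ?mul0rn ?oppr0 ?addr0 ?subr0.
Qed.

Lemma bk_3 (hmal : forall X Y Z : A * V, jac (dsum_br brA brV rho) X Y ((dsum_br brA brV rho) X Z) = (dsum_br brA brV rho) (jac (dsum_br brA brV rho) X Y Z) X) (x : A) (a : V) (b : V) (c : V) :
  (brV (rho x a) (brV b c)) = ((((brV (brV (rho x b) a) c) - (rho x (brV (brV b a) c))) - (brV (rho x (brV a c)) b)) - (brV (brV (rho x c) b) a)).
Proof using All.
apply/eqP; rewrite -subr_eq0; apply/eqP.
apply: (@mulrn_zero 2) => //.
have E : forall D0 D1 D2 D3 D4 D5 D6 D7 D8 : V, D0 = (jac (dsum_br brA brV rho) (x, 0) (0, b) ((dsum_br brA brV rho) (x, 0) (0, c))).2 - ((dsum_br brA brV rho) (jac (dsum_br brA brV rho) (x, 0) (0, b) (0, c)) (x, 0)).2 -> D1 = (jac (dsum_br brA brV rho) (0, a) (x, 0) ((dsum_br brA brV rho) (0, a) (0, b))).2 - ((dsum_br brA brV rho) (jac (dsum_br brA brV rho) (0, a) (x, 0) (0, b)) (0, a)).2 -> D2 = (jac (dsum_br brA brV rho) (0, a) (0, b) ((dsum_br brA brV rho) (0, a) (0, c))).2 - ((dsum_br brA brV rho) (jac (dsum_br brA brV rho) (0, a) (0, b) (0, c)) (0, a)).2 -> D3 = (jac (dsum_br brA brV rho) (0, a) (0, c) ((dsum_br brA brV rho) (0, a) (x, 0))).2 - ((dsum_br brA brV rho) (jac (dsum_br brA brV rho) (0, a) (0, c) (x, 0)) (0, a)).2 ->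 D4 = (jac (dsum_br brA brV rho) (0, b) (0, c) ((dsum_br brA brV rho) (0, b) (x, 0))).2 - ((dsum_br brA brV rho) (jac (dsum_br brA brV rho) (0, b) (0, c) (x, 0)) (0, b)).2 -> D5 = (jac (dsum_br brA brV rho) (0, c) (x, 0) ((dsum_br brA brV rho) (0, c) (0, b))).2 - ((dsum_br brA brV rho) (jac (dsum_br brA brV rho) (0, c) (x, 0) (0, b)) (0, c)).2 -> D6 = (jac (dsum_br brA brV rho) (0, (a + b)) (0, c) ((dsum_br brA brV rho) (0, (a + b)) (x, 0))).2 - ((dsum_br brA brV rho) (jac (dsum_br brA brV rho) (0, (a + b)) (0, c) (x, 0)) (0, (a + b))).2 -> D7 = (jac (dsum_br brA brV rho) (0, (a + c)) (x, 0) ((dsum_br brA brV rho) (0, (a + c)) (0, b))).2 - ((dsum_br brA brV rho) (jac (dsum_br brA brV rho) (0, (a + c)) (x, 0) (0, b)) (0, (a + c))).2 -> D8 = (jac (dsum_br brA brV rho) (x, a) (0, b) ((dsum_br brA brV rho) (x, a) (0, c))).2 - ((dsum_br brA brV rho) (jac (dsum_br brA brV rho) (x, a) (0, b) (0, c)) (x, a)).2 -> ((brV (rho x a) (brV b c)) - ((((brV (brV (rho x b) a) c) - (rho x (brV (brV b a) c))) - (brV (rho x (brV a c)) b)) - (brV (brV (rho x c) b) a))) *+ 2 = 0 + D0 *+ 1 - D1 *+ 1 + D2 *+ 1 - D3 *+ 1 - D4 *+ 1 - D5 *+ 1 + D6 *+ 1 + D7 *+ 1 - D8 *+ 1.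
{ move=> D0 D1 D2 D3 D4 D5 D6 D7 D8 -> -> -> -> -> -> -> -> ->; refl_tac [:: x] [:: a; b; c]. }
rewrite (E 0 0 0 0 0 0 0 0 0 (eq_sub0 (congr1 snd (hmal (x, 0) (0, b) (0, c)))) (eq_sub0 (congr1 snd (hmal (0, a) (x, 0) (0, b)))) (eq_sub0 (congr1 snd (hmal (0, a) (0, b) (0, c)))) (eq_sub0 (congr1 snd (hmal (0, a) (0, c) (x, 0)))) (eq_sub0 (congr1 snd (hmal (0, b) (0, c) (x, 0)))) (eq_sub0 (congr1 snd (hmal (0, c) (x, 0) (0, b)))) (eq_sub0 (congr1 snd (hmal (0, (a + b)) (0, c) (x, 0)))) (eq_sub0 (congr1 snd (hmal (0, (a + c)) (x, 0) (0, b)))) (eq_sub0 (congr1 snd (hmal (x, a) (0, b) (0, c))))).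
by rewrite ?mul0rn ?oppr0 ?addr0 ?subr0.
Qed.

Lemma bk_assoc (hass : forall X Y Z : A * V, (dsum_pr prA prV mu) X ((dsum_pr prA prV mu) Y Z) = (dsum_pr prA prV mu) ((dsum_pr prA prV mu) X Y) Z) (x : A) (y : A) (a : V) :
  (mu (prA x y) a) = (mu x (mu y a)).
Proof using All.
apply/eqP; rewrite -subr_eq0; apply/eqP.
have E : forall D0 : V, D0 = ((dsum_pr prA prV mu) (x, 0) ((dsum_pr prA prV mu) (y, 0) (0, a))).2 - ((dsum_pr prA prV mu) ((dsum_pr prA prV mu) (x, 0) (y, 0)) (0, a)).2 -> ((mu (prA x y) a) - (mu x (mu y a))) = 0 - D0 *+ 1.
{ move=> D0 ->; refl_tac [:: x; y] [:: a]. }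
rewrite (E 0 (eq_sub0 (congr1 snd (hass (x, 0) (y, 0) (0, a))))).
by rewrite ?mul0rn ?oppr0 ?addr0 ?subr0.
Qed.

Lemma bk_mup (hass : forall X Y Z : A * V, (dsum_pr prA prV mu) X ((dsum_pr prA prV mu) Y Z) = (dsum_pr prA prV mu) ((dsum_pr prA prV mu) X Y) Z) (x : A) (a : V) (b : V) :
  (mu x (prV a b)) = (prV (mu x a) b).
Proof using All.
apply/eqP; rewrite -subr_eq0; apply/eqP.
have E : forall D0 : V, D0 = ((dsum_pr prA prV mu) (x, 0) ((dsum_pr prA prV mu) (0, a) (0, b))).2 - ((dsum_pr prA prV mu) ((dsum_pr prA prV mu) (x, 0) (0, a)) (0, b)).2 -> ((mu x (prV a b)) - (prV (mu x a) b)) = 0 + D0 *+ 1.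
{ move=> D0 ->; refl_tac [:: x] [:: a; b]. }
rewrite (E 0 (eq_sub0 (congr1 snd (hass (x, 0) (0, a) (0, b))))).
by rewrite ?mul0rn ?oppr0 ?addr0 ?subr0.
Qed.

Lemma bk_rhopr (hlei : forall X Y Z : A * V, (dsum_br brA brV rho) X ((dsum_pr prA prV mu) Y Z) = (dsum_pr prA prV mu) ((dsum_br brA brV rho) X Y) Z + (dsum_pr prA prV mu) Y ((dsum_br brA brV rho) X Z)) (x : A) (y : A) (a : V) :
  (rho (prA x y) a) = ((mu y (rho x a)) + (mu x (rho y a))).
Proof using All.
apply/eqP; rewrite -subr_eq0; apply/eqP.
have E : forall D0 : V, D0 = ((dsum_br brA brV rho) (0, a) ((dsum_pr prA prV mu) (x, 0) (y, 0))).2 - (((dsum_pr prA prV mu) ((dsum_br brA brV rho) (0, a) (x, 0)) (y, 0)) + ((dsum_pr prA prV mu) (x, 0) ((dsum_br brA brV rho) (0, a) (y, 0)))).2 -> ((rho (prA x y) a) - ((mu y (rho x a)) + (mu x (rho y a)))) = 0 - D0 *+ 1.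
{ move=> D0 ->; refl_tac [:: x; y] [:: a]. }
rewrite (E 0 (eq_sub0 (congr1 snd (hlei (0, a) (x, 0) (y, 0))))).
by rewrite ?mul0rn ?oppr0 ?addr0 ?subr0.
Qed.

Lemma bk_mubr (hlei : forall X Y Z : A * V, (dsum_br brA brV rho) X ((dsum_pr prA prV mu) Y Z) = (dsum_pr prA prV mu) ((dsum_br brA brV rho) X Y) Z + (dsum_pr prA prV mu) Y ((dsum_br brA brV rho) X Z)) (x : A) (y : A) (a : V) :
  (mu (brA x y) a) = ((rho x (mu y a)) - (mu y (rho x a))).
Proof using All.
apply/eqP; rewrite -subr_eq0; apply/eqP.
have E : forall D0 : V, D0 = ((dsum_br brA brV rho) (x, 0) ((dsum_pr prA prV mu) (y, 0) (0, a))).2 - (((dsum_pr prA prV mu) ((dsum_br brA brV rho) (x, 0) (y, 0)) (0, a)) + ((dsum_pr prA prV mu) (y, 0) ((dsum_br brA brV rho) (x, 0) (0, a)))).2 -> ((mu (brA x y) a) - ((rho x (mu y a)) - (mu y (rho x a)))) = 0 - D0 *+ 1.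
{ move=> D0 ->; refl_tac [:: x; y] [:: a]. }
rewrite (E 0 (eq_sub0 (congr1 snd (hlei (x, 0) (y, 0) (0, a))))).
by rewrite ?mul0rn ?oppr0 ?addr0 ?subr0.
Qed.

Lemma bk_der (hlei : forall X Y Z : A * V, (dsum_br brA brV rho) X ((dsum_pr prA prV mu) Y Z) = (dsum_pr prA prV mu) ((dsum_br brA brV rho) X Y) Z + (dsum_pr prA prV mu) Y ((dsum_br brA brV rho) X Z)) (x : A) (a : V) (b : V) :
  (rho x (prV a b)) = ((prV (rho x a) b) + (prV a (rho x b))).
Proof using All.
apply/eqP; rewrite -subr_eq0; apply/eqP.
have E : forall D0 : V, D0 = ((dsum_br brA brV rho) (x, 0) ((dsum_pr prA prV mu) (0, a) (0, b))).2 - (((dsum_pr prA prV mu) ((dsum_br brA brV rho) (x, 0) (0, a)) (0, b)) + ((dsum_pr prA prV mu) (0, a) ((dsum_br brA brV rho) (x, 0) (0, b)))).2 -> ((rho x (prV a b)) - ((prV (rho x a) b) + (prV a (rho x b)))) = 0 + D0 *+ 1.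
{ move=> D0 ->; refl_tac [:: x] [:: a; b]. }
rewrite (E 0 (eq_sub0 (congr1 snd (hlei (x, 0) (0, a) (0, b))))).
by rewrite ?mul0rn ?oppr0 ?addr0 ?subr0.
Qed.

Lemma bk_brmu (hlei : forall X Y Z : A * V, (dsum_br brA brV rho) X ((dsum_pr prA prV mu) Y Z) = (dsum_pr prA prV mu) ((dsum_br brA brV rho) X Y) Z + (dsum_pr prA prV mu) Y ((dsum_br brA brV rho) X Z)) (x : A) (a : V) (b : V) :
  (brV a (mu x b)) = ((- (prV (rho x a) b)) + (mu x (brV a b))).
Proof using All.
apply/eqP; rewrite -subr_eq0; apply/eqP.
have E : forall D0 : V, D0 = ((dsum_br brA brV rho) (0, a) ((dsum_pr prA prV mu) (x, 0) (0, b))).2 - (((dsum_pr prA prV mu) ((dsum_br brA brV rho) (0, a) (x, 0)) (0, b)) + ((dsum_pr prA prV mu) (x, 0) ((dsum_br brA brV rho) (0, a) (0, b)))).2 -> ((brV a (mu x b)) - ((- (prV (rho x a) b)) + (mu x (brV a b)))) = 0 + D0 *+ 1.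
{ move=> D0 ->; refl_tac [:: x] [:: a; b]. }
rewrite (E 0 (eq_sub0 (congr1 snd (hlei (0, a) (x, 0) (0, b))))).
by rewrite ?mul0rn ?oppr0 ?addr0 ?subr0.
Qed.

End Gen.

Lemma pair_ext (K : fieldType) (A V : lmodType K) (p q : A * V) : p.1 = q.1 -> p.2 = q.2 -> p = q.
Proof. by case: p q => [? ?] [? ?] /= -> ->. Qed.

Theorem mainTheorem5 (K : closedFieldType) (hK : [pchar K] =i pred0)
  (A V : vectType K) (brA prA : A -> A -> A) (brV prV : V -> V -> V)
  (rho mu : A -> V -> V)
  (hA : malcev_poisson brA prA) (hV : malcev_poisson brV prV)
  (hrho : lin_end rho) (hmu : lin_end mu) :
  module_malcev_poisson brA prA brV prV rho mu <->
  malcev_poisson (dsum_br brA brV rho) (dsum_pr prA prV mu).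
Proof.
case: hA => [[bbA aA mA] bpA cA asA lA]; case: hV => [[bbV aV mV] bpV cV asV lV].
have G := (fun (P : Prop) (f : forall (hK : [pchar K] =i pred0) (bbA : bilin brA) (bpA : bilin prA) (bbV : bilin brV) (bpV : bilin prV) (hrho : lin_end rho) (hmu : lin_end mu) (aA : forall x y, brA x y = - brA y x) (aV : forall x y, brV x y = - brV y x) (cA : forall x y, prA x y = prA y x) (cV : forall x y, prV x y = prV y x), P) => f hK bbA bpA bbV bpV hrho hmu aA aV cA cV).
split.
- case=> [[hrep h2 h2b h3] [hass hmup] [_ _ hrhopr hmubr] hder hbrmu].
  split.
  + split.
    * exact: (G _ (@dbr_bilin K A V brA prA brV prV rho mu)).
    * exact: (G _ (@dbr_anti K A V brA prA brV prV rho mu)).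
    * move=> [x a] [y b] [z c]; apply: pair_ext.
        exact: (mA x y z).
      exact: (G _ (@fwd_mal K A V brA prA brV prV rho mu) hrep h2 h2b h3 mV).
  + exact: (G _ (@dpr_bilin K A V brA prA brV prV rho mu)).
  + exact: (G _ (@dpr_comm K A V brA prA brV prV rho mu)).
  + move=> [x a] [y b] [z c]; apply: pair_ext; first exact: asA.
    exact: (G _ (@fwd_assoc K A V brA prA brV prV rho mu) hass hmup asV).
  + move=> [x a] [y b] [z c]; apply: pair_ext; first exact: lA.
    exact: (G _ (@fwd_leib K A V brA prA brV prV rho mu) hrhopr hmubr hder hbrmu lV).
- case=> [[bD aD mD] bpD cD asD lD].
  have hrep : malcev_rep brA rho by move=> x y z v; exact: (G _ (@bk_rep K A V brA prA brV prV rho mu) mD).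
  have hass : assoc_rep prA mu by move=> x y v; exact: (G _ (@bk_assoc K A V brA prA brV prV rho mu) asD).
  split.
  + split => //.
    * exact: (G _ (@bk_2 K A V brA prA brV prV rho mu) mD).
    * exact: (G _ (@bk_2b K A V brA prA brV prV rho mu) mD).
    * exact: (G _ (@bk_3 K A V brA prA brV prV rho mu) mD).
  + split => //. exact: (G _ (@bk_mup K A V brA prA brV prV rho mu) asD).
  + split => //.
    * exact: (G _ (@bk_rhopr K A V brA prA brV prV rho mu) lD).
    * exact: (G _ (@bk_mubr K A V brA prA brV prV rho mu) lD).
  + exact: (G _ (@bk_der K A V brA prA brV prV rho mu) lD).
  + exact: (G _ (@bk_brmu K A V brA prA brV prV rho mu) lD).
Qed.
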